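(* Fix $n\ge3$ and $M>0$ satisfying (A) and (B). There exists $\bar\epsilon>0$ such that: if $f:V^n\to[0,1]$ is anonymous and BIC in $\Gamma^0$, then there is a family $\{f_\epsilon\}_{\epsilon\in(0,\bar\epsilon]}$ of anonymous SCFs $f_\epsilon:V^n\to[0,1]$ such that (i) each $f_\epsilon$ is BIC in $\Gamma^\epsilon$, and (ii) $f_\epsilon(v)\to f(v)$ as $\epsilon\to0$ for every $v\in V^n$.
   Context: Fix $n\ge 3$ agents $N=\{1,\dots,n\}$, choosing between Reform $R$ (agent $i$'s utility $v_i$) and Status quo $S$ (utility $0$). Let $M>0$ satisfy (A): $\frac{2}{n}\left[-M^2+M+n-2\right]+\frac{n-2}{n}\left[2M+n-4\right]<0$, and (B): $2M-(n-2)>0$. Let $V=\{-M^2,-1,1,M\}$. For $\epsilon\in[0,1/4]$, the environment $\Gamma^\epsilon$ has independent values $\tilde v_1,\dots,\tilde v_n$ with distributions: for agents $1,2$: $\Pr(-M^2)=0.5-\epsilon$, $\Pr(-1)=\epsilon$, $\Pr(1)=\epsilon$, $\Pr(M)=0.5-\epsilon$; for agents $3,\dots,n$: $\Pr(-M^2)=\epsilon$, $\Pr(-1)=0.5-\epsilon$, $\Pr(1)=0.5-\epsilon$, $\Pr(M)=\epsilon$. An SCF is any $f:V^n\to[0,1]$, defined on all of $V^n$ (including zero-probability profiles). $f$ is anonymous if $f(v)=f(\pi v)$ for all $v\in V^n$ and permutations $\pi$ of $N$, where $\pi v=(v_{\pi(1)},\dots,v_{\pi(n)})$. $f$ is BIC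 in $\Gamma^\epsilon$ if for every agent $i$ and all reports $v_i,v_i'\in V$: $v_i\,\mathbb{E}^\epsilon(f(v_i,\tilde v_{-i}))\ge v_i\,\mathbb{E}^\epsilon(f(v_i',\tilde v_{-i}))$, expectation over $\tilde v_{-i}$ under $\Gamma^\epsilon$. *)

(* Defs.v *)
From HB Require Import structures.
From mathcomp Require Import all_boot all_order all_algebra fingroup perm.
From mathcomp Require Import all_classical all_reals all_analysis.
Set Implicit Arguments. Unset Strict Implicit. Unset Printing Implicit Defensive.
Import Order.TTheory GRing.Theory Num.Theory.
Local Open Scope ring_scope.

Definition val_of {R : realType} (M : R) (k : 'I_4) : R :=
  match nat_of_ord k with
  | 0 => - M ^+ 2
  | 1 => -1
  | 2 => 1
  | _ => M
  end.

(* A profile v in V^n; agent i (paper: i+1) has type v i. *)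
Definition profile (n : nat) := {ffun 'I_n -> 'I_4}.

(* Probability that agent j has type k in Gamma^eps.
   Agents 1,2 of the paper are indices 0,1. *)
Definition prob {R : realType} (n : nat) (eps : R) (j : 'I_n) (k : 'I_4) : R :=
  if (nat_of_ord j < 2)%N then
    match nat_of_ord k with
    | 0 => 2^-1 - eps | 1 => eps | 2 => eps | _ => 2^-1 - eps end
  else
    match nat_of_ord k with
    | 0 => eps | 1 => 2^-1 - eps | 2 => 2^-1 - eps | _ => eps end.

Definition interim {R : realType} (n : nat) (eps : R) (f : profile n -> R)
  (i : 'I_n) (x : 'I_4) : R :=
  \sum_(w : {ffun 'I_n -> 'I_4})
     (\prod_(j < n) (if j == i then (w j == x)%:R else prob eps j (w j))) * f w.

Definition is_SCF {R : realType} (n : nat) (f : profile n -> R) : Prop :=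
  forall v, 0 <= f v <= 1.

Definition anonymous {R : realType} (n : nat) (f : profile n -> R) : Prop :=
  forall (v : profile n) (s : {perm 'I_n}), f v = f [ffun i => v (s i)].

Definition BIC {R : realType} (n : nat) (M eps : R) (f : profile n -> R) : Prop :=
  forall (i : 'I_n) (x x' : 'I_4),
    val_of M x * interim eps f i x' <= val_of M x * interim eps f i x.

Definition condA {R : realType} (n : nat) (M : R) : Prop :=
  2 / n%:R * (- M ^+ 2 + M + n%:R - 2) + (n%:R - 2) / n%:R * (2 * M + n%:R - 4) < 0.

Definition condB {R : realType} (n : nat) (M : R) : Prop :=
  2 * M - (n%:R - 2) > 0.

(* Main.v *)
Require Import Defs.
From HB Require Import structures.
From mathcomp Require Import all_boot all_order all_algebra fingroup perm.
From mathcomp Require Import all_classical all_reals all_analysis.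
From mathcomp Require Import ring lra.
Import Order.TTheory GRing.Theory Num.Theory numFieldNormedType.Exports.
Local Open Scope ring_scope.
Local Open Scope classical_set_scope.
Set Implicit Arguments. Unset Strict Implicit. Unset Printing Implicit Defensive.

Definition grp {n} (j : 'I_n) := (nat_of_ord j < 2)%N.

Lemma prob_grp (R : realType) n (eps : R) (j j' : 'I_n) k :
  grp j = grp j' -> prob eps j k = prob eps j' k.
Proof. by rewrite /prob /grp => ->. Qed.

Definition hf (R : realType) : R := 2^-1.
Lemma hf2 (R : realType) : hf R + hf R = 1.
Proof. by rewrite /hf; field. Qed.

Lemma prob_val (R : realType) n (eps : R) (j : 'I_n) k :
  prob eps j k = if grp j then (if (nat_of_ord k == 0)%N || (nat_of_ord k == 3)%N then hf R - eps else eps)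
                 else (if (nat_of_ord k == 0)%N || (nat_of_ord k == 3)%N then eps else hf R - eps).
Proof. rewrite /prob /grp; case: ifP => _; case: k => [[|[|[|[|k]]]] Hk] //=. Qed.

Lemma sum_prob (R : realType) n (eps : R) (j : 'I_n) : \sum_k prob eps j k = 1.
Proof.
rewrite !big_ord_recr big_ord0 /= !prob_val /= -(hf2 R).
case: (grp j); ring.
Qed.

Lemma interim_ext (R : realType) n (eps : R) (f g : profile n -> R) i x :
  (forall w, f w = g w) -> interim eps f i x = interim eps g i x.
Proof. by move=> h; apply: eq_bigr => w _; rewrite h. Qed.

Lemma interim_lin (R : realType) n (eps : R) (f g : profile n -> R) a b i x :
  interim eps (fun w => a * f w + b * g w) i x =
  a * interim eps f i x + b * interim eps g i x.
Proof.
rewrite /interim !mulr_sumr -big_split; apply: eq_bigr => w _ /=.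
by rewrite mulrDr !mulrA ![_ * a]mulrC ![_ * b]mulrC.
Qed.

Lemma interim_prod (R : realType) n (eps : R) (phi : 'I_n -> 'I_4 -> R) i x :
  interim eps (fun w => \prod_j phi j (w j)) i x =
  \prod_j (if j == i then phi j x else \sum_k prob eps j k * phi j k).
Proof.
rewrite /interim.
transitivity (\sum_(w : {ffun 'I_n -> 'I_4}) \prod_j
   ((if j == i then (w j == x)%:R else prob eps j (w j)) * phi j (w j))).
  by apply: eq_bigr => w _; rewrite big_split.
rewrite -(bigA_distr_bigA (fun j k => (if j == i then (k == x)%:R else prob eps j k) * phi j k)) /=; apply: eq_bigr => j _.
case: eqP => _ //.
rewrite (bigD1 x) //= eqxx mul1r big1 ?addr0 // => k /negPf ->; by rewrite mul0r.
Qed.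

Lemma interim_scale (R : realType) n (eps : R) (f : profile n -> R) a i x :
  interim eps (fun w => a * f w) i x = a * interim eps f i x.
Proof.
rewrite /interim mulr_sumr; apply: eq_bigr => w _ /=; by rewrite mulrCA.
Qed.

Lemma interim_sum (R : realType) n (eps : R) (I : finType) (g : I -> profile n -> R) i x :
  interim eps (fun w => \sum_(l : I) g l w) i x = \sum_(l : I) interim eps (g l) i x.
Proof.
rewrite /interim; under eq_bigr do rewrite mulr_sumr; exact: exchange_big.
Qed.

Lemma interim_const (R : realType) n (eps : R) c (i : 'I_n) x :
  interim eps (fun _ => c) i x = c.
Proof.
rewrite (@interim_ext _ _ _ _ (fun w => c * \prod_(j < n) (fun _ _ => 1) j (w j))); last first.
  by move=> w; rewrite big1 ?mulr1.
rewrite interim_scale (@interim_prod _ _ _ (fun _ _ => 1)) big1 ?mulr1 // => j _.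
case: eqP => // _; under eq_bigr do rewrite mulr1; exact: sum_prob.
Qed.

Lemma grp_tperm n (i i' j : 'I_n) : grp i = grp i' -> grp (tperm i i' j) = grp j.
Proof. by move=> Hg; case: tpermP => [->|->|] //. Qed.

Lemma interim_sym (R : realType) n (eps : R) f (i i' : 'I_n) x :
  anonymous f -> grp i = grp i' -> interim eps f i x = interim eps f i' x.
Proof.
move=> Af Hg; rewrite /interim.
set s := tperm i i'.
have sK : forall j, s (s j) = j by move=> j; rewrite /s tpermK.
rewrite (reindex_inj (h := fun w : {ffun 'I_n -> 'I_4} => [ffun j => w (s j)])) /=; last first.
  move=> w1 w2 /ffunP H; apply/ffunP => j; have := H (s j); by rewrite !ffunE sK.
apply: eq_bigr => w _; rewrite -Af; congr (_ * _).
rewrite (reindex_inj (@perm_inj _ s)) /=; apply: eq_bigr => j _.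
rewrite ffunE sK.
have -> : (s j == i) = (j == i').
  by rewrite -[X in s j == X](tpermR i i') (inj_eq (@perm_inj _ s)).
case: eqP => // _; apply: prob_grp; exact: grp_tperm.
Qed.

Definition K (R : realType) n (eps : R) (i : 'I_n) (k : 'I_4) : R :=
  \prod_(j | j != i) (1 + prob eps j k).

Lemma K_sym (R : realType) n (eps : R) (i i' : 'I_n) k :
  grp i = grp i' -> K eps i k = K eps i' k.
Proof.
move=> Hg; rewrite /K; set s := tperm i i'.
rewrite (reindex_inj (@perm_inj _ s)) /=.
have E : forall j, (s j != i) = (j != i').
  by move=> j; rewrite -[X in s j != X](tpermR i i') (inj_eq (@perm_inj _ s)).
rewrite (eq_bigl (fun j => j != i')); last by move=> j; rewrite E.
apply: eq_bigr => j _; congr (_ + _); apply: prob_grp; exact: grp_tperm.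
Qed.

Definition corr (R : realType) n (psi s : 'I_4 -> R) (w : profile n) : R :=
  \sum_(l < n) psi (w l) + \sum_k s k * \prod_(j < n) (1 + (w j == k)%:R).

Lemma interim_corr (R : realType) n (eps : R) (psi s : 'I_4 -> R) (i : 'I_n) :
  exists C, forall x, interim eps (corr psi s) i x = psi x + s x * K eps i x + C.
Proof.
pose phi (l j : 'I_n) (k : 'I_4) := if j == l then psi k else 1.
pose D (l : 'I_n) := \prod_(j | j != i) \sum_k prob eps j k * phi l j k.
exists (\sum_(l | l != i) D l + \sum_k s k * K eps i k) => x.
rewrite (@interim_ext _ _ _ _ (fun w => 1 * (\sum_(l < n) \prod_j phi l j (w j)) +
    1 * \sum_k s k * \prod_(j < n) (1 + (w j == k)%:R))); last first.
  move=> w; rewrite !mul1r /corr; congr (_ + _); apply: eq_bigr => l _.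
  by rewrite (bigD1 l) //= /phi eqxx big1 ?mulr1 // => j /negPf ->.
rewrite interim_lin !mul1r !interim_sum.
have H1 : forall l, interim eps (fun w => \prod_j phi l j (w j)) i x = phi l i x * D l.
  move=> l; rewrite interim_prod (bigD1 i) //= eqxx; congr (_ * _).
  by apply: eq_bigr => j /negPf ->.
under eq_bigr do rewrite H1.
have H2 : forall k, interim eps (fun w => s k * \prod_(j < n) (1 + (w j == k)%:R)) i x
     = s k * ((1 + (x == k)%:R) * K eps i k).
  move=> k; rewrite interim_scale (@interim_prod _ _ _ (fun _ k2 => 1 + (k2 == k)%:R)) (bigD1 i) //= eqxx; congr (_ * (_ * _)).
  apply: eq_bigr => j /negPf ->.
  under eq_bigr do rewrite mulrDr mulr1.
  rewrite big_split /= sum_prob; congr (_ + _).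
  rewrite (bigD1 k) //= eqxx mulr1 big1 ?addr0 // => k' /negPf ->; by rewrite mulr0.
under [X in _ + X = _]eq_bigr do rewrite H2.
rewrite (bigD1 i) //= /phi eqxx.
have -> : D i = 1.
  rewrite /D big1 // => j /negPf Hj; rewrite /phi Hj.
  under eq_bigr do rewrite mulr1; exact: sum_prob.
rewrite mulr1.
have E1 : \sum_(i0 < n | i0 != i) (if i == i0 then psi x else 1) * D i0 = \sum_(l < n | l != i) D l.
  by apply: eq_bigr => l; rewrite eq_sym => /negPf ->; rewrite mul1r.
have E2 : \sum_(i0 < 4) s i0 * ((1 + (x == i0)%:R) * K eps i i0) =
   s x * K eps i x + \sum_(k < 4) s k * K eps i k.
  rewrite [in RHS](bigD1 x) //= [in LHS](bigD1 x) //= eqxx addrA; congr (_ + _).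
    by rewrite mulrDl mul1r mulrDr addrC.
  by apply: eq_bigr => k; rewrite eq_sym => /negPf ->; rewrite addr0 mul1r.
rewrite E1 E2; ring.
Qed.

Lemma cont_prob (R : realType) n (j : 'I_n) (k : 'I_4) :
  prob e j k @[e --> (0:R)] --> prob 0 j k.
Proof.
under eq_cvg do rewrite prob_val.
rewrite prob_val.
case: (grp j); case: ifP => _; try exact: cvg_id.
all: by apply: cvgB; [exact: cvg_cst | exact: cvg_id].
Qed.

Lemma cont_sum (R : realType) (I : finType) (g : I -> R -> R) :
  (forall l, g l e @[e --> (0:R)] --> g l 0) ->
  \sum_(l : I) g l e @[e --> (0:R)] --> \sum_(l : I) g l 0.
Proof. move=> H; apply: cvg_big => //; exact: add_continuous. Qed.

Lemma cont_prod (R : realType) (I : finType) (P : pred I) (g : I -> R -> R) :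
  (forall l, g l e @[e --> (0:R)] --> g l 0) ->
  \prod_(l | P l) g l e @[e --> (0:R)] --> \prod_(l | P l) g l 0.
Proof. move=> H; apply: cvg_big => //; exact: mul_continuous. Qed.

Lemma cont_interim (R : realType) n (f : profile n -> R) i x :
  interim e f i x @[e --> (0:R)] --> interim 0 f i x.
Proof.
rewrite /interim; apply: cont_sum => w; apply: cvgM; last exact: cvg_cst.
apply: cont_prod => j; case: eqP => _; [exact: cvg_cst | exact: cont_prob].
Qed.

Lemma cont_K (R : realType) n (i : 'I_n) k :
  K e i k @[e --> (0:R)] --> K 0 i k.
Proof.
rewrite /K; apply: cont_prod => j; apply: cvgD; [exact: cvg_cst | exact: cont_prob].
Qed.

Lemma prob_ge0 (R : realType) n (e : R) (j : 'I_n) k :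
  0 <= e <= hf R / 4 -> 0 <= prob e j k.
Proof.
move=> /andP[h0 h1]; have h := hf2 R; rewrite prob_val.
by case: (grp j); case: ifP => _; lra.
Qed.

Lemma K_gt0 (R : realType) n (e : R) (i : 'I_n) k :
  0 <= e <= hf R / 4 -> 0 < K e i k.
Proof.
move=> he; rewrite /K; apply: prodr_gt0 => j _.
have := prob_ge0 j k he; lra.
Qed.

Lemma K_neq (R : realType) n (e : R) (a b : 'I_n) k :
  grp a = true -> grp b = false -> 0 <= e <= hf R / 4 -> K e b k - K e a k != 0.
Proof.
move=> ga gb he; rewrite subr_eq0; apply/negP => /eqP E.
have EP : (1 + prob e a k) * K e a k = (1 + prob e b k) * K e b k.
  transitivity (\prod_(j < n) (1 + prob e j k)); last by rewrite (bigD1 b).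
  by rewrite (bigD1 a).
rewrite E in EP; have {}EP := mulIf (lt0r_neq0 (K_gt0 a k he)) EP; move: EP.
rewrite !prob_val ga gb; have h := hf2 R; move: he => /andP[h0 h1].
case: ifP => _ ; lra.
Qed.


Definition rep n (a b : 'I_n) (g : bool) := if g then a else b.
Definition TT (R : realType) n (a b : 'I_n) (f : profile n -> R) g x := interim 0 f (rep a b g) x.
Definition rr (R : realType) n (a b : 'I_n) (f : profile n -> R) (e : R) g x :=
  TT a b f g x - interim e f (rep a b g) x.
Definition KK (R : realType) n (a b : 'I_n) (e : R) g x := K e (rep a b g) x.
Definition ss (R : realType) n (a b : 'I_n) (f : profile n -> R) (e : R) x :=
  (rr a b f e false x - rr a b f e true x) / (KK a b e false x - KK a b e true x).
Definition pp (R : realType) n (a b : 'I_n) (f : profile n -> R) (e : R) x :=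
  rr a b f e true x - ss a b f e x * KK a b e true x.

Lemma interim_G (R : realType) n (a b : 'I_n) (f : profile n -> R) (e : R) (i : 'I_n) :
  grp a = true -> grp b = false -> 0 <= e <= hf R / 4 -> anonymous f ->
  exists C, forall x, interim e (fun w => f w + corr (pp a b f e) (ss a b f e) w) i x
    = TT a b f (grp i) x + C.
Proof.
move=> ga gb he Af.
have [C HC] := interim_corr e (pp a b f e) (ss a b f e) i.
exists C => x.
rewrite (@interim_ext _ _ _ _ (fun w => 1 * f w + 1 * corr (pp a b f e) (ss a b f e) w)); last first.
  by move=> w; rewrite !mul1r.
rewrite interim_lin !mul1r HC.
have gr : grp (rep a b (grp i)) = grp i by rewrite /rep; case: (grp i).
rewrite (interim_sym e x Af (esym gr)) (K_sym e x (esym gr)).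
rewrite !addrA; congr (_ + _).
have : interim e f (rep a b (grp i)) x = TT a b f (grp i) x - rr a b f e (grp i) x.
  by rewrite /rr; ring.
move=> ->.
have hn := K_neq x ga gb he.
rewrite /pp /ss /rr /KK /TT /rep.
case: (grp i) => /=.
  ring.
by field.
Qed.

Definition Bd (R : realType) n (psi s : 'I_4 -> R) : R :=
  (\sum_k `|psi k|) * n%:R + (\sum_k `|s k|) * 2 ^+ n.

Lemma Bd_ge0 (R : realType) n (psi s : 'I_4 -> R) : 0 <= Bd n psi s.
Proof.
by rewrite /Bd addr_ge0 // mulr_ge0 // ?sumr_ge0 // ?exprn_ge0 // => k _.
Qed.

Lemma corr_bound (R : realType) n (psi s : 'I_4 -> R) (w : profile n) :
  `|corr psi s w| <= Bd n psi s.
Proof.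
rewrite /corr /Bd; apply: le_trans (ler_normD _ _) _; apply: lerD.
  apply: le_trans (ler_norm_sum _ _ _) _.
  apply: (le_trans (_ : _ <= \sum_(l < n) \sum_k `|psi k|)).
    apply: ler_sum => l _; rewrite (bigD1 (w l)) //= lerDl sumr_ge0 //.
  by rewrite sumr_const card_ord mulr_natr.
apply: le_trans (ler_norm_sum _ _ _) _; rewrite mulr_suml; apply: ler_sum => k _.
rewrite normrM; apply: ler_wpM2l => //.
have H0 : forall j : 'I_n, 0 <= 1 + (w j == k)%:R :> R.
  by move=> j; rewrite addr_ge0.
rewrite ger0_norm ?prodr_ge0 //.
apply: (le_trans (_ : _ <= \prod_(j < n) (2 : R))); last by rewrite prodr_const card_ord.
apply: ler_prod => j _; rewrite H0 /=.
by case: (w j == k); rewrite /= ?addr0 // lerDl.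
Qed.

Definition tt (R : realType) (B : R) : R := 2 * B / (1 + 2 * B).

Definition FF (R : realType) n (a b : 'I_n) (f : profile n -> R) (e : R) (w : profile n) : R :=
  let B := Bd n (pp a b f e) (ss a b f e) in
  (1 - tt B) * (f w + corr (pp a b f e) (ss a b f e) w) + tt B / 2.

Lemma tt_props (R : realType) (B : R) : 0 <= B ->
  0 <= tt B /\ 0 <= 1 - tt B /\ (1 - tt B) * B = tt B / 2.
Proof.
move=> hB; have h1 : 0 < 1 + 2 * B by lra.
rewrite /tt; split; first by rewrite divr_ge0 //; lra.
split; last by field; lra.
rewrite subr_ge0 ler_pdivrMr // mul1r; lra.
Qed.

Lemma FF_SCF (R : realType) n (a b : 'I_n) (f : profile n -> R) (e : R) :
  is_SCF f -> is_SCF (FF a b f e).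
Proof.
move=> Sf w; rewrite /FF.
set B := Bd n _ _; set c := corr _ _ w.
have [t0 [t1 tB]] := tt_props (Bd_ge0 n (pp a b f e) (ss a b f e)).
rewrite -/B in t0 t1 tB.
have := corr_bound (pp a b f e) (ss a b f e) w; rewrite -/B -/c ler_norml => /andP[c0 c1].
have /andP[f0 f1] := Sf w.
have h1 : 0 <= (1 - tt B) * (f w + c + B) by apply: mulr_ge0 => //; lra.
have h2 : 0 <= (1 - tt B) * (1 + B - f w - c) by apply: mulr_ge0 => //; lra.
apply/andP; split; nra.
Qed.

Lemma corr_anon (R : realType) n (psi s : 'I_4 -> R) (v : profile n) (p : {perm 'I_n}) :
  corr psi s [ffun i => v (p i)] = corr psi s v.
Proof.
rewrite /corr; congr (_ + _).
  rewrite [RHS](reindex_inj (@perm_inj _ p)) /=; apply: eq_bigr => l _; by rewrite ffunE.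
apply: eq_bigr => k _; congr (_ * _).
rewrite [RHS](reindex_inj (@perm_inj _ p)) /=; apply: eq_bigr => l _; by rewrite ffunE.
Qed.

Lemma FF_anon (R : realType) n (a b : 'I_n) (f : profile n -> R) (e : R) :
  anonymous f -> anonymous (FF a b f e).
Proof. by move=> Af v p; rewrite /FF corr_anon -Af. Qed.

Lemma FF_BIC (R : realType) n (M : R) (a b : 'I_n) (f : profile n -> R) (e : R) :
  grp a = true -> grp b = false -> 0 <= e <= hf R / 4 -> anonymous f -> BIC M 0 f ->
  BIC M e (FF a b f e).
Proof.
move=> ga gb he Af Bf i x x'.
set B := Bd n (pp a b f e) (ss a b f e).
have [t0 [t1 tB]] := tt_props (Bd_ge0 n (pp a b f e) (ss a b f e)).
rewrite -/B in t0 t1 tB.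
have [C HC] := interim_G i ga gb he Af.
have E : forall y, interim e (FF a b f e) i y = (1 - tt B) * (TT a b f (grp i) y + C) + tt B / 2.
  move=> y.
  rewrite (@interim_ext _ _ _ _ (fun w => (1 - tt B) * (f w + corr (pp a b f e) (ss a b f e) w) + (tt B / 2) * 1)); last first.
    by move=> w; rewrite /FF mulr1.
  rewrite (@interim_lin _ _ _ _ (fun _ => 1)) interim_const HC mulr1 //.
rewrite !E.
have H := Bf (rep a b (grp i)) x x'; rewrite -/(TT a b f (grp i) x) -/(TT a b f (grp i) x') in H.
have h : 0 <= (1 - tt B) * (val_of M x * TT a b f (grp i) x - val_of M x * TT a b f (grp i) x').
  by apply: mulr_ge0 => //; rewrite subr_ge0.
nra.
Qed.

Lemma cvg_eqlim (R : realType) (g : R -> R) (a c : R) :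
  a = c -> g e @[e --> (0:R)] --> a -> g e @[e --> (0:R)] --> c.
Proof. by move=> ->. Qed.

Lemma sum_cvg (R : realType) (I : finType) (g : I -> R -> R) (lim : I -> R) :
  (forall l, g l e @[e --> (0:R)] --> lim l) ->
  \sum_(l : I) g l e @[e --> (0:R)] --> \sum_(l : I) lim l.
Proof. move=> H; apply: cvg_big => //; exact: add_continuous. Qed.

Lemma rr_cvg (R : realType) n (a b : 'I_n) (f : profile n -> R) g x :
  rr a b f e g x @[e --> (0:R)] --> 0.
Proof.
apply: (@cvg_eqlim _ _ (TT a b f g x - interim 0 f (rep a b g) x)); first by rewrite /TT subrr.
rewrite /rr; apply: cvgB; [exact: cvg_cst | exact: cont_interim].
Qed.

Lemma ss_cvg (R : realType) n (a b : 'I_n) (f : profile n -> R) x :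
  grp a = true -> grp b = false -> ss a b f e x @[e --> (0:R)] --> 0.
Proof.
move=> ga gb.
have hn : K 0 b x - K 0 a x != 0 :> R.
  apply: K_neq => //; rewrite lexx /= divr_ge0 //; rewrite /hf invr_ge0 //.
apply: (@cvg_eqlim _ _ ((0 - 0) * (K 0 b x - K 0 a x)^-1)); first by rewrite subrr mul0r.
rewrite /ss; apply: cvgM.
  by apply: cvgB; exact: rr_cvg.
apply: cvgV => //; apply: cvgB; exact: cont_K.
Qed.

Lemma pp_cvg (R : realType) n (a b : 'I_n) (f : profile n -> R) x :
  grp a = true -> grp b = false -> pp a b f e x @[e --> (0:R)] --> 0.
Proof.
move=> ga gb.
apply: (@cvg_eqlim _ _ (0 - 0 * K 0 a x)); first by rewrite mul0r subrr.
rewrite /pp; apply: cvgB; first exact: rr_cvg.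
apply: cvgM; [exact: ss_cvg | exact: cont_K].
Qed.

Lemma Bd_cvg (R : realType) n (a b : 'I_n) (f : profile n -> R) :
  grp a = true -> grp b = false ->
  Bd n (pp a b f e) (ss a b f e) @[e --> (0:R)] --> 0.
Proof.
move=> ga gb.
apply: (@cvg_eqlim _ _ ((\sum_(k < 4) `|0 : R|) * n%:R + (\sum_(k < 4) `|0 : R|) * 2 ^+ n)).
  by rewrite normr0 big1 // mul0r add0r mul0r.
rewrite /Bd; apply: cvgD; apply: cvgM; try exact: cvg_cst.
  by apply: sum_cvg => k; apply: cvg_norm; exact: pp_cvg.
by apply: sum_cvg => k; apply: cvg_norm; exact: ss_cvg.
Qed.

Lemma FF_cvg (R : realType) n (a b : 'I_n) (f : profile n -> R) v :
  grp a = true -> grp b = false ->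
  FF a b f e v @[e --> (0:R)] --> f v.
Proof.
move=> ga gb.
have hB := Bd_cvg f ga gb.
have ht : tt (Bd n (pp a b f e) (ss a b f e)) @[e --> (0:R)] --> 0.
  apply: (@cvg_eqlim _ _ ((2 * 0) * (1 + 2 * 0)^-1)); first by rewrite !mulr0 mul0r.
  rewrite /tt; apply: cvgM.
    by apply: cvgM => //; exact: cvg_cst.
  apply: cvgV; first by rewrite mulr0 addr0 oner_neq0.
  apply: cvgD; first exact: cvg_cst.
  by apply: cvgM => //; exact: cvg_cst.
have hc : corr (pp a b f e) (ss a b f e) v @[e --> (0:R)] --> 0.
  apply: (@cvg_eqlim _ _ (\sum_(l < n) (0:R) + \sum_(k < 4) 0 * \prod_(j < n) (1 + (v j == k)%:R))).
    by rewrite big1 // big1 ?addr0 // => k _; rewrite mul0r.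
  rewrite /corr; apply: cvgD.
    by apply: sum_cvg => l; exact: pp_cvg.
  apply: sum_cvg => k; apply: cvgM; [exact: ss_cvg | exact: cvg_cst].
apply: (@cvg_eqlim _ _ ((1 - 0) * (f v + 0) + 0 / 2)).
  by rewrite subr0 mul1r addr0 mul0r addr0.
rewrite /FF; apply: cvgD.
  apply: cvgM; first by apply: cvgB => //; exact: cvg_cst.
  by apply: cvgD => //; exact: cvg_cst.
by apply: cvgM => //; exact: cvg_cst.
Qed.

Theorem lemma6 (R : realType) (n : nat) (M : R) :
  (3 <= n)%N -> 0 < M -> condA n M -> condB n M ->
  exists ebar : R, 0 < ebar /\
    forall f : profile n -> R,
      is_SCF f -> anonymous f -> BIC M 0 f ->
      exists F : R -> profile n -> R,
        (forall eps : R, 0 < eps <= ebar ->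
           is_SCF (F eps) /\ anonymous (F eps) /\ BIC M eps (F eps)) /\
        (forall v : profile n, (fun eps : R => F eps v) @ (0:R)^'+ --> f v).
Proof.
move=> n3 M0 _ _.
have h0 : (0 < n)%N by apply: leq_trans n3.
have h2 : (2 < n)%N by [].
pose a := Ordinal h0; pose b := Ordinal h2.
have ga : grp a = true by [].
have gb : grp b = false by [].
exists (hf R / 4); split.
  by rewrite divr_gt0 // /hf invr_gt0.
move=> f Sf Af Bf; exists (FF a b f); split.
  move=> e /andP[e0 e1].
  have he : 0 <= e <= hf R / 4 by rewrite e1 ltW.
  split; first exact: FF_SCF.
  split; first exact: FF_anon.
  exact: FF_BIC.
move=> v; apply: cvg_at_right_filter; exact: FF_cvg.
Qed.
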